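(* Let $\theta\in(0,\pi)$. For any $r_1,r_2\in(0,\frac{\pi}{2})$ there exists, up to isometry, a unique spherical bigon of angle $\theta$ with sides labeled $1,2$ such that, for $i=1,2$, the disk $D_i\subset\mathbb{S}^2$ whose boundary contains side $i$ has radius $r_i$.
   Context: A spherical bigon is the intersection $D_1\cap D_2$ of two open round disks in the unit sphere $\mathbb{S}^2$ of radii less than $\frac{\pi}{2}$, neither containing the other; its two sides are the boundary arcs lying on $\partial D_1$ and $\partial D_2$, and its angle is the interior angle formed by the two sides at the corners. *)

(* Defs.v *)
From HB Require Import structures.
From mathcomp Require Import all_boot all_order all_algebra.
From mathcomp Require Import boolp classical_sets reals trigo.
Set Implicit Arguments. Unset Strict Implicit. Unset Printing Implicit Defensive.
Import Order.TTheory GRing.Theory Num.Theory.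
Local Open Scope ring_scope.
Local Open Scope classical_set_scope.

Section Sphere.
Variable R : realType.

Record vec3 := V3 { vx : R; vy : R; vz : R }.

Definition dot (u v : vec3) : R := vx u * vx v + vy u * vy v + vz u * vz v.
Definition vnorm (u : vec3) : R := Num.sqrt (dot u u).
Definition vopp (u : vec3) : vec3 := V3 (- vx u) (- vy u) (- vz u).
Definition cross (u v : vec3) : vec3 :=
  V3 (vy u * vz v - vz u * vy v)
     (vz u * vx v - vx u * vz v)
     (vx u * vy v - vy u * vx v).

Definition sphere : set vec3 := [set x | dot x x = 1].
Definition sdist (x y : vec3) : R := acos (dot x y).

Definition disk (c : vec3) (r : R) : set vec3 :=
  [set x | sphere x /\ sdist x c < r].
Definition circle (c : vec3) (r : R) : set vec3 :=
  [set x | sphere x /\ sdist x c = r].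
Definition cdisk (c : vec3) (r : R) : set vec3 :=
  [set x | sphere x /\ sdist x c <= r].

(* (c1,r1,c2,r2) defines a spherical bigon D1 ∩ D2: both are round disks of
   radius in (0, pi/2), the intersection is nonempty (so the bigon exists),
   and neither disk contains the other. *)
Definition is_bigon (c1 : vec3) (r1 : R) (c2 : vec3) (r2 : R) : Prop :=
  [/\ sphere c1, sphere c2, 0 < r1 < pi / 2 & 0 < r2 < pi / 2] /\
  [/\ disk c1 r1 `&` disk c2 r2 !=set0,
      ~ (disk c1 r1 `<=` disk c2 r2) & ~ (disk c2 r2 `<=` disk c1 r1)].

Definition bigon (c1 : vec3) (r1 : R) (c2 : vec3) (r2 : R) : set vec3 :=
  disk c1 r1 `&` disk c2 r2.
Definition side1 (c1 : vec3) (r1 : R) (c2 : vec3) (r2 : R) : set vec3 :=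
  circle c1 r1 `&` cdisk c2 r2.
Definition side2 (c1 : vec3) (r1 : R) (c2 : vec3) (r2 : R) : set vec3 :=
  cdisk c1 r1 `&` circle c2 r2.
Definition corner (c1 : vec3) (r1 : R) (c2 : vec3) (r2 : R) : set vec3 :=
  circle c1 r1 `&` circle c2 r2.

(* At a corner p, the side lying on the circle of center c leaves p in the
   tangent direction of that circle (parallel to p x c) which points into the
   other disk (of center c'), i.e. has nonnegative derivative of <., c'>. *)
Definition side_dir (p c c' : vec3) : vec3 :=
  let t := cross p c in if 0 <= dot t c' then t else vopp t.

Definition corner_angle (c1 c2 p : vec3) : R :=
  let t1 := side_dir p c1 c2 in
  let t2 := side_dir p c2 c1 in
  acos (dot t1 t2 / (vnorm t1 * vnorm t2)).

Definition bigon_has_angle (c1 : vec3) (r1 : R) (c2 : vec3) (r2 : R)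
    (theta : R) : Prop :=
  forall p, corner c1 r1 c2 r2 p -> corner_angle c1 c2 p = theta.

Definition sphere_isometry (f : vec3 -> vec3) : Prop :=
  forall x y, sphere x -> sphere y ->
    sphere (f x) /\ sdist (f x) (f y) = sdist x y.

Definition bigon_congruent (c1 : vec3) (r1 : R) (c2 : vec3) (r2 : R)
    (c1' : vec3) (r1' : R) (c2' : vec3) (r2' : R) : Prop :=
  exists f, [/\ sphere_isometry f,
    f @` bigon c1 r1 c2 r2 = bigon c1' r1' c2' r2',
    f @` side1 c1 r1 c2 r2 = side1 c1' r1' c2' r2' &
    f @` side2 c1 r1 c2 r2 = side2 c1' r1' c2' r2'].

End Sphere.

(* Main.v *)
Require Import Defs.
From HB Require Import structures.
From mathcomp Require Import all_boot all_order all_algebra.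
From mathcomp Require Import boolp classical_sets reals trigo.
From mathcomp Require Import ring lra.
Import Order.TTheory GRing.Theory Num.Theory.
Local Open Scope ring_scope.
Local Open Scope classical_set_scope.
Set Warnings "-all".
Set Implicit Arguments. Unset Strict Implicit. Unset Printing Implicit Defensive.
Section Vec.
Variable R : realType.
Implicit Types (u v w x y z p : vec3 R).

Definition lin3 (a b c : R) u v w : vec3 R :=
  V3 (a * vx u + b * vx v + c * vx w) (a * vy u + b * vy v + c * vy w)
     (a * vz u + b * vz v + c * vz w).

Lemma dotC u v : dot u v = dot v u.
Proof. by case: u => ? ? ?; case: v => ? ? ?; rewrite /dot /=; ring. Qed.

Lemma dot_lin3l a b c u v w z :
  dot (lin3 a b c u v w) z = a * dot u z + b * dot v z + c * dot w z.
Proof.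
by case: u => ? ? ?; case: v => ? ? ?; case: w => ? ? ?; case: z => ? ? ?;
  rewrite /dot /lin3 /=; ring.
Qed.

Lemma dot_lin3r a b c u v w z :
  dot z (lin3 a b c u v w) = a * dot z u + b * dot z v + c * dot z w.
Proof. by rewrite dotC dot_lin3l !(dotC z). Qed.

Lemma dot_cross_l u v : dot (cross u v) u = 0.
Proof. by case: u => ? ? ?; case: v => ? ? ?; rewrite /dot /=; ring. Qed.
Lemma dot_cross_r u v : dot (cross u v) v = 0.
Proof. by case: u => ? ? ?; case: v => ? ? ?; rewrite /dot /=; ring. Qed.

Lemma dot_cross_cross p u v :
  dot (cross p u) (cross p v) = dot p p * dot u v - dot p v * dot p u.
Proof. by case: p => ? ? ?; case: u => ? ? ?; case: v => ? ? ?; rewrite /dot /=; ring. Qed.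

Lemma cross_swap p u v : dot (cross p v) u = - dot (cross p u) v.
Proof. by case: p => ? ? ?; case: u => ? ? ?; case: v => ? ? ?; rewrite /dot /=; ring. Qed.

Lemma triple p u v : dot (cross p u) v = dot p (cross u v).
Proof. by case: p => ? ? ?; case: u => ? ? ?; case: v => ? ? ?; rewrite /dot /=; ring. Qed.

Lemma gram x y u v :
  dot x (cross u v) * dot y (cross u v) =
  dot x y * (dot u u * dot v v - dot u v ^+ 2)
  - dot x u * (dot y u * dot v v - dot u v * dot y v)
  + dot x v * (dot y u * dot u v - dot u u * dot y v).
Proof.
by case: x => ? ? ?; case: y => ? ? ?; case: u => ? ? ?; case: v => ? ? ?;
  rewrite /dot /=; ring.
Qed.

Lemma dual y u v :
  dot u u * dot v v - dot u v ^+ 2 != 0 ->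
  y = lin3 ((dot y u * dot v v - dot y v * dot u v) / (dot u u * dot v v - dot u v ^+ 2))
           ((dot y v * dot u u - dot y u * dot u v) / (dot u u * dot v v - dot u v ^+ 2))
           (dot y (cross u v) / (dot u u * dot v v - dot u v ^+ 2)) u v (cross u v).
Proof.
case: y => y1 y2 y3; case: u => u1 u2 u3; case: v => v1 v2 v3.
rewrite /dot /lin3 /cross /= => H.
congr V3; field; exact: H.
Qed.

Lemma dot_vopp_l u v : dot (vopp u) v = - dot u v.
Proof. by case: u => ? ? ?; case: v => ? ? ?; rewrite /dot /=; ring. Qed.
Lemma dot_vopp_r u v : dot u (vopp v) = - dot u v.
Proof. by case: u => ? ? ?; case: v => ? ? ?; rewrite /dot /=; ring. Qed.
Lemma vnorm_vopp u : vnorm (vopp u) = vnorm u.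
Proof. by rewrite /vnorm dot_vopp_l dot_vopp_r opprK. Qed.

Lemma dot_ge0 u : 0 <= dot u u.
Proof. case: u => a b c; rewrite /dot /=; nra. Qed.

Lemma lin3_100 u v w : lin3 1 0 0 u v w = u.
Proof. by case: u => ? ? ?; rewrite /lin3 /=; congr V3; ring. Qed.
Lemma lin3_010 u v w : lin3 0 1 0 u v w = v.
Proof. by case: v => ? ? ?; rewrite /lin3 /=; congr V3; ring. Qed.
Lemma lin3_001 u v w : lin3 0 0 1 u v w = w.
Proof. by case: w => ? ? ?; rewrite /lin3 /=; congr V3; ring. Qed.

Lemma sphE x : sphere x -> dot x x = 1.
Proof. by []. Qed.

Lemma dot_bound x c : sphere x -> sphere c -> -1 <= dot x c <= 1.
Proof.
rewrite /sphere /= => hx hc.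
have := dot_ge0 (cross x c); rewrite dot_cross_cross hx hc.
move=> h; apply/andP; split; nra.
Qed.

End Vec.
Section Iso.
Variable R : realType.
Implicit Types (u v w x y z p : vec3 R).

Definition iso (c1 c2 c1' c2' : vec3 R) x : vec3 R :=
  let a := dot c1 c2 in
  lin3 ((dot x c1 - a * dot x c2) / (1 - a ^+ 2))
       ((dot x c2 - a * dot x c1) / (1 - a ^+ 2))
       (dot x (cross c1 c2) / (1 - a ^+ 2)) c1' c2' (cross c1' c2').

Variables c1 c2 c1' c2' : vec3 R.
Hypotheses (h1 : sphere c1) (h2 : sphere c2) (h1' : sphere c1') (h2' : sphere c2').
Hypothesis ha : dot c1' c2' = dot c1 c2.
Hypothesis hG : 1 - dot c1 c2 ^+ 2 != 0.

Let u1 : dot c1 c1 = 1 := h1.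
Let u2 : dot c2 c2 = 1 := h2.
Let u1' : dot c1' c1' = 1 := h1'.
Let u2' : dot c2' c2' = 1 := h2'.

Lemma iso_dot x y : dot (iso c1 c2 c1' c2' x) (iso c1 c2 c1' c2' y) = dot x y.
Proof.
rewrite /iso dot_lin3l !dot_lin3r.
have e1 : dot c1' (cross c1' c2') = 0 by rewrite dotC dot_cross_l.
have e2 : dot c2' (cross c1' c2') = 0 by rewrite dotC dot_cross_r.
have nn : dot (cross c1' c2') (cross c1' c2') = 1 - dot c1 c2 ^+ 2.
  by rewrite dot_cross_cross u1' u2' ha; ring.
rewrite e1 e2 dot_cross_l dot_cross_r nn u1' u2' ha (dotC c2' c1') ha.
have key := gram x y c1 c2.
rewrite u1 u2 in key.
have -> : dot x y = (dot x (cross c1 c2) * dot y (cross c1 c2)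
   + dot x c1 * (dot y c1 * 1 - dot c1 c2 * dot y c2)
   - dot x c2 * (dot y c1 * dot c1 c2 - 1 * dot y c2)) / (1 - dot c1 c2 ^+ 2).
  by rewrite key; field.
by field.
Qed.

Lemma iso_c1 : iso c1 c2 c1' c2' c1 = c1'.
Proof.
rewrite /iso u1 (dotC c1 (cross _ _)) dot_cross_l.
rewrite -[RHS](lin3_100 c1' c2' (cross c1' c2')); congr lin3.
- by field.
- by field.
- by field.
Qed.

Lemma iso_c2 : iso c1 c2 c1' c2' c2 = c2'.
Proof.
rewrite /iso u2 (dotC c2 (cross _ _)) dot_cross_r (dotC c2 c1).
rewrite -[RHS](lin3_010 c1' c2' (cross c1' c2')); congr lin3.
- by field.
- by field.
- by field.
Qed.

Lemma iso_n : iso c1 c2 c1' c2' (cross c1 c2) = cross c1' c2'.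
Proof.
rewrite /iso dot_cross_l dot_cross_r dot_cross_cross u1 u2.
rewrite -[RHS](lin3_001 c1' c2' (cross c1' c2')); congr lin3.
- by field.
- by field.
- by field.
Qed.

Lemma iso_sphere x : sphere x -> sphere (iso c1 c2 c1' c2' x).
Proof. by rewrite /sphere /= iso_dot. Qed.

End Iso.

Section IsoInv.
Variable R : realType.
Variables c1 c2 c1' c2' : vec3 R.
Hypotheses (h1 : sphere c1) (h2 : sphere c2) (h1' : sphere c1') (h2' : sphere c2').
Hypothesis ha : dot c1' c2' = dot c1 c2.
Hypothesis hG : 1 - dot c1 c2 ^+ 2 != 0.

Lemma iso_inv y : iso c1 c2 c1' c2' (iso c1' c2' c1 c2 y) = y.
Proof.
have ha' : dot c1 c2 = dot c1' c2' by [].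
have hG' : 1 - dot c1' c2' ^+ 2 != 0 by rewrite ha.
set g := iso c1' c2' c1 c2.
have gd : forall x y, dot (g x) (g y) = dot x y by move=> x z; apply: iso_dot.
have g1 : g c1' = c1  by apply: iso_c1.
have g2 : g c2' = c2  by apply: iso_c2.
have gn : g (cross c1' c2') = cross c1 c2  by apply: iso_n.
have e1 : dot (g y) c1 = dot y c1' by rewrite -g1 gd.
have e2 : dot (g y) c2 = dot y c2' by rewrite -g2 gd.
have en : dot (g y) (cross c1 c2) = dot y (cross c1' c2') by rewrite -gn gd.
rewrite /iso e1 e2 en.
have u1' : dot c1' c1' = 1 := h1'.
have u2' : dot c2' c2' = 1 := h2'.
have hd : dot c1' c1' * dot c2' c2' - dot c1' c2' ^+ 2 != 0.
  by rewrite u1' u2' mul1r ha.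
rewrite [RHS](dual y hd) u1' u2' ha.
by congr lin3; field; rewrite ?mulr1.
Qed.
End IsoInv.
Section Congr.
Variable R : realType.
Variables c1 c2 c1' c2' : vec3 R.
Hypotheses (h1 : sphere c1) (h2 : sphere c2) (h1' : sphere c1') (h2' : sphere c2').
Hypothesis ha : dot c1' c2' = dot c1 c2.
Hypothesis hG : 1 - dot c1 c2 ^+ 2 != 0.

Lemma iso_img (Phi : R -> R -> R -> Prop) (A A' : set (vec3 R)) :
  (forall x, A x <-> Phi (dot x x) (dot x c1) (dot x c2)) ->
  (forall x, A' x <-> Phi (dot x x) (dot x c1') (dot x c2')) ->
  iso c1 c2 c1' c2' @` A = A'.
Proof.
move=> HA HA'.
have ha' : dot c1 c2 = dot c1' c2' by [].
have hG' : 1 - dot c1' c2' ^+ 2 != 0 by rewrite ha.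
set f := iso c1 c2 c1' c2'; set g := iso c1' c2' c1 c2.
have fd : forall x y, dot (f x) (f y) = dot x y by move=> x y; apply: iso_dot.
have gd : forall x y, dot (g x) (g y) = dot x y by move=> x y; apply: iso_dot.
have f1 : f c1 = c1' by apply: iso_c1.
have f2 : f c2 = c2' by apply: iso_c2.
have g1 : g c1' = c1 by apply: iso_c1.
have g2 : g c2' = c2 by apply: iso_c2.
have fg : forall y, f (g y) = y by move=> y; apply: iso_inv.
apply/seteqP; split.
- move=> _ [x Ax <-]; apply/HA'.
  have e1 := fd x c1; rewrite f1 in e1.
  have e2 := fd x c2; rewrite f2 in e2.
  by rewrite fd e1 e2; apply/HA.
- move=> y A'y; exists (g y); last exact: fg.
  have e1 := gd y c1'; rewrite g1 in e1.
  have e2 := gd y c2'; rewrite g2 in e2.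
  by apply/HA; rewrite gd e1 e2; apply/HA'.
Qed.

Lemma iso_congr r1 r2 : bigon_congruent c1 r1 c2 r2 c1' r1 c2' r2.
Proof.
exists (iso c1 c2 c1' c2'); split.
- move=> x y hx hy; split; first exact: iso_sphere.
  by rewrite /sdist iso_dot.
- apply: (iso_img (Phi := fun xx u v => (xx = 1 /\ acos u < r1) /\ (xx = 1 /\ acos v < r2)));
  by move=> x.
- apply: (iso_img (Phi := fun xx u v => (xx = 1 /\ acos u = r1) /\ (xx = 1 /\ acos v <= r2)));
  by move=> x.
- apply: (iso_img (Phi := fun xx u v => (xx = 1 /\ acos u <= r1) /\ (xx = 1 /\ acos v = r2)));
  by move=> x.
Qed.
End Congr.
Local Close Scope classical_set_scope.
Section Trig.
Variable R : realType.
Implicit Types (x c p : vec3 R) (d r t : R).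

Lemma in11 d : -1 <= d <= 1 -> d \in `[(-1), 1].
Proof. by rewrite in_itv. Qed.
Lemma in0pi d : 0 <= d <= pi -> d \in `[0, pi].
Proof. by rewrite in_itv. Qed.
Lemma acos_in d : -1 <= d <= 1 -> acos d \in `[0, pi].
Proof. by move=> h; rewrite in_itv /= acos_ge0 // acos_lepi. Qed.

Lemma acos_lt_iff d r : -1 <= d <= 1 -> 0 <= r <= pi -> (acos d < r) = (cos r < d).
Proof.
move=> hd hr; rewrite -[in RHS](acosK (in11 hd)).
by have H1 := in0pi hr; have H2 := acos_in hd; rewrite ltr_cos.
Qed.

Lemma acos_le_iff d r : -1 <= d <= 1 -> 0 <= r <= pi -> (acos d <= r) = (cos r <= d).
Proof.
move=> hd hr; rewrite !leNgt -[in RHS](acosK (in11 hd)).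
by have H1 := in0pi hr; have H2 := acos_in hd; rewrite ltr_cos.
Qed.

Lemma acos_eq_iff d r : -1 <= d <= 1 -> 0 <= r <= pi -> (acos d = r) <-> (d = cos r).
Proof.
move=> hd hr; split => [<-|->]; first by rewrite acosK // in11.
by rewrite cosK // in0pi.
Qed.

Lemma cos_lt_abs t r : `|t| <= pi -> 0 <= r <= pi -> (cos r < cos t) = (`|t| < r).
Proof.
move=> ht hr; have H1 := in0pi hr.
have H2 : `|t| \in `[0, pi] by rewrite in_itv /= normr_ge0 ht.
by rewrite -(cos_norm t) ltr_cos.
Qed.

Lemma sin_acos2 d : -1 <= d <= 1 -> sin (acos d) ^+ 2 = 1 - d ^+ 2.
Proof. by move=> h; rewrite sin2cos2 acosK // in11. Qed.

Lemma sin_acos_ge0 d : -1 <= d <= 1 -> 0 <= sin (acos d).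
Proof. by move=> h; apply: sin_ge0_pi; rewrite acos_ge0 // acos_lepi. Qed.

Lemma gram_ineq x c c' : sphere x -> sphere c -> sphere c' ->
  (dot x c' - dot x c * dot c c') ^+ 2 <= (1 - dot x c ^+ 2) * (1 - dot c c' ^+ 2).
Proof.
rewrite /sphere /= => hx hc hc'.
have := gram x x c c'; rewrite hx hc hc' => e.
have : 0 <= dot x (cross c c') * dot x (cross c c') by rewrite -expr2 sqr_ge0.
rewrite e => h; nra.
Qed.

Lemma lower_bound x c c' : sphere x -> sphere c -> sphere c' ->
  cos (acos (dot x c) + acos (dot c c')) <= dot x c'.
Proof.
move=> hx hc hc'.
have hu := dot_bound hx hc; have ha := dot_bound hc hc'.
have g := gram_ineq hx hc hc'.
rewrite cosD !acosK ?in11 //.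
have s1 := sin_acos2 hu; have s2 := sin_acos2 ha.
have p1 := sin_acos_ge0 hu; have p2 := sin_acos_ge0 ha.
move: g; rewrite -s1 -s2.
set u := dot x c; set a := dot c c'; set v := dot x c'.
set S := sin (acos u); set T := sin (acos a) => g.
have P : 0 <= S * T by apply: mulr_ge0.
nra.
Qed.

End Trig.
Local Open Scope classical_set_scope.
Section Corner.
Variable R : realType.
Implicit Types (x c p : vec3 R).

Lemma corner_D2 c1 c2 p k1 k2 : sphere c1 -> sphere c2 -> sphere p ->
  dot p c1 = k1 -> dot p c2 = k2 ->
  dot (cross p c1) c2 ^+ 2 =
  1 + 2 * k1 * k2 * dot c1 c2 - k1 ^+ 2 - k2 ^+ 2 - dot c1 c2 ^+ 2.
Proof.
move=> /sphE h1 /sphE h2 /sphE hp e1 e2.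
rewrite triple expr2 gram hp h1 h2 e1 e2; ring.
Qed.

Lemma vnorm_cross p c k s : sphere p -> sphere c -> dot p c = k ->
  k ^+ 2 + s ^+ 2 = 1 -> 0 <= s -> vnorm (cross p c) = s.
Proof.
move=> /sphE hp /sphE hc e hks s0.
rewrite /vnorm dot_cross_cross hp hc e.
have -> : 1 * 1 - k * k = s ^+ 2 by rewrite mul1r -hks; ring.
by rewrite sqrtr_sqr ger0_norm.
Qed.

Lemma corner_formula c1 c2 p k1 k2 s1 s2 :
  sphere c1 -> sphere c2 -> sphere p -> dot p c1 = k1 -> dot p c2 = k2 ->
  k1 ^+ 2 + s1 ^+ 2 = 1 -> k2 ^+ 2 + s2 ^+ 2 = 1 -> 0 < s1 -> 0 < s2 ->
  dot (cross p c1) c2 != 0 ->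
  corner_angle c1 c2 p = acos ((k1 * k2 - dot c1 c2) / (s1 * s2)).
Proof.
move=> h1 h2 hp e1 e2 hk1 hk2 s1p s2p hD.
have n1 := vnorm_cross hp h1 e1 hk1 (ltW s1p).
have n2 := vnorm_cross hp h2 e2 hk2 (ltW s2p).
have cc : dot (cross p c1) (cross p c2) = dot c1 c2 - k2 * k1.
  by rewrite dot_cross_cross e1 e2 hp mul1r.
rewrite /corner_angle /side_dir (cross_swap p c1 c2).
set D := dot (cross p c1) c2.
have [Dn|Dp] : D < 0 \/ 0 < D by move: hD; rewrite neq_lt => /orP.
- rewrite ifF; last by rewrite leNgt Dn.
  rewrite ifT; last by rewrite oppr_ge0 ltW.
  rewrite vnorm_vopp n1 n2 dot_vopp_l cc; congr acos; field.
  by rewrite !gt_eqF.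
- rewrite ifT; last exact: ltW.
  rewrite ifF; last by rewrite oppr_ge0 leNgt Dp.
  rewrite vnorm_vopp n1 n2 dot_vopp_r cc; congr acos; field.
  by rewrite !gt_eqF.
Qed.
End Corner.
Local Close Scope classical_set_scope.
Ltac bnd := apply/andP; split; lra.

Section BigonFacts.
Variable R : realType.
Implicit Types (x c p : vec3 R).

Lemma trig_facts (r : R) : 0 < r < pi / 2 ->
  [/\ 0 < cos r, 0 < sin r, cos r ^+ 2 + sin r ^+ 2 = 1 & 0 < (pi : R)].
Proof.
move=> hr; split; last exact: pi_gt0 R.
- apply: cos_gt0_pihalf; case/andP: hr => h1 h2; apply/andP; split => //.
  have : 0 < (pi : R) := pi_gt0 R; lra.
- exact: sin_gt0_pihalf.
- exact: cos2Dsin2.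
Qed.

Lemma disk_contain c c' (r r' : R) : sphere c -> sphere c' -> 0 < r -> r <= r' ->
  r' < pi / 2 -> cos (r' - r) <= dot c c' -> (disk c r `<=` disk c' r')%classic.
Proof.
move=> hc hc' r0 rr' r'p ha x [hx d]; split => //; move: d; rewrite /sdist => d.
have hxb := dot_bound hx hc; have hxb' := dot_bound hx hc'.
have hab := dot_bound hc hc'.
have pi0 : 0 < (pi : R) := pi_gt0 R.
have d' : acos (dot c c') <= r' - r by rewrite acos_le_iff //; bnd.
have lb := lower_bound hx hc hc'.
have p0 := acos_ge0 hxb; have q0 := acos_ge0 hab.
move: d d' lb p0 q0.
set u := acos (dot x c); set v := acos (dot c c') => d d' lb p0 q0.
have : cos r' < cos (u + v) by rewrite ltr_cos ?in0pi //; [lra | bnd | bnd].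
rewrite acos_lt_iff //; [lra | bnd].
Qed.

Lemma G_pos c1 c2 (r1 r2 : R) : is_bigon c1 r1 c2 r2 ->
  0 < 1 + 2 * cos r1 * cos r2 * dot c1 c2 - cos r1 ^+ 2 - cos r2 ^+ 2 - dot c1 c2 ^+ 2.
Proof.
case=> [[h1 h2 hr1 hr2] [[x [[hx d1] [_ d2]]] nc1 nc2]].
have [k1p s1p hk1 pi0] := trig_facts hr1.
have [k2p s2p hk2 _] := trig_facts hr2.
case/andP: hr1 => r10 r1p; case/andP: hr2 => r20 r2p.
have hab := dot_bound h1 h2.
move: hk1 hk2 k1p k2p s1p s2p.
set k1 := cos r1; set k2 := cos r2; set s1 := sin r1; set s2 := sin r2; set a := dot c1 c2.
move=> hk1 hk2 k1p k2p s1p s2p.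
rewrite ltNge; apply/negP => HG.
have eG : 1 + 2 * k1 * k2 * a - k1 ^+ 2 - k2 ^+ 2 - a ^+ 2 = (s1 * s2) ^+ 2 - (a - k1 * k2) ^+ 2.
  have e1 : s1 ^+ 2 = 1 - k1 ^+ 2 by lra.
  have e2 : s2 ^+ 2 = 1 - k2 ^+ 2 by lra.
  rewrite exprMn e1 e2; ring.
rewrite eG in HG.
have s12 : 0 < s1 * s2 by apply: mulr_gt0.
have [C1|C2] : a <= k1 * k2 - s1 * s2 \/ k1 * k2 + s1 * s2 <= a.
  by case: (lerP 0 (a - k1 * k2)) => h; [right|left]; nra.
- have lb := lower_bound h1 hx h2.
  rewrite (dotC c1 x) -/a in lb.
  have hb1 := dot_bound hx h1; have hb2 := dot_bound hx h2.
  have p0 := acos_ge0 hb1; have q0 := acos_ge0 hb2.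
  move: d1 d2; rewrite /sdist => d1 d2.
  move: lb p0 q0 d1 d2.
  set u := acos (dot x c1); set v := acos (dot x c2) => lb p0 q0 d1 d2.
  have : cos (r1 + r2) < cos (u + v) by rewrite ltr_cos ?in0pi //; [lra | bnd | bnd].
  rewrite cosD -/k1 -/k2 -/s1 -/s2 => h.
  by have := lt_le_trans (lt_le_trans h lb) C1; rewrite ltxx.
- case: (lerP r1 r2) => hr.
  + apply: nc1; apply: disk_contain => //.
    by rewrite cosB -/k1 -/k2 -/s1 -/s2 -/a (mulrC k2) (mulrC s2).
  + apply: nc2; apply: disk_contain => //; first exact: ltW.
    by rewrite cosB dotC -/k1 -/k2 -/s1 -/s2 -/a.
Qed.
End BigonFacts.
Local Open Scope classical_set_scope.
Local Close Scope classical_set_scope.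
Section Unique.
Variable R : realType.
Implicit Types (x c p : vec3 R).

Lemma frame_facts c1 c2 (al be ga : R) : sphere c1 -> sphere c2 ->
  let p := lin3 al be ga c1 c2 (cross c1 c2) in
  let a := dot c1 c2 in
  [/\ dot p c1 = al + be * a, dot p c2 = al * a + be,
      dot p p = al ^+ 2 + 2 * al * be * a + be ^+ 2 + ga ^+ 2 * (1 - a ^+ 2) &
      dot (cross p c1) c2 = ga * (1 - a ^+ 2)].
Proof.
move=> /sphE h1 /sphE h2 p a.
have n1 : dot (cross c1 c2) c1 = 0 := dot_cross_l _ _.
have n2 : dot (cross c1 c2) c2 = 0 := dot_cross_r _ _.
have nn : dot (cross c1 c2) (cross c1 c2) = 1 - a ^+ 2.
  by rewrite dot_cross_cross h1 h2 /a; ring.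
have d21 : dot c2 c1 = a by rewrite dotC.
split.
- by rewrite /p dot_lin3l h1 n1 d21 -/a; ring.
- by rewrite /p dot_lin3l h2 n2 -/a; ring.
- rewrite /p dot_lin3l !dot_lin3r h1 h2 d21 -/a nn n1 n2.
  rewrite (dotC c1 (cross _ _)) (dotC c2 (cross _ _)) n1 n2; ring.
- rewrite triple /p dot_lin3l (dotC c1) (dotC c2) n1 n2 nn; ring.
Qed.

Lemma angle_dot c1 c2 (r1 r2 th : R) : 0 < th < pi ->
  is_bigon c1 r1 c2 r2 -> bigon_has_angle c1 r1 c2 r2 th ->
  dot c1 c2 = cos r1 * cos r2 - sin r1 * sin r2 * cos th /\ 1 - dot c1 c2 ^+ 2 != 0.
Proof.
move=> hth HB hang.
have G0 := G_pos HB.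
case: HB => [[h1 h2 hr1 hr2] _].
have [k1p s1p hk1 pi0] := trig_facts hr1.
have [k2p s2p hk2 _] := trig_facts hr2.
have hr1' : 0 <= r1 <= pi by case/andP: hr1 => *; bnd.
have hr2' : 0 <= r2 <= pi by case/andP: hr2 => *; bnd.
have hth' : 0 <= th <= pi by case/andP: hth => *; bnd.
have hab := dot_bound h1 h2.
move: G0 hk1 hk2 k1p k2p s1p s2p.
set k1 := cos r1; set k2 := cos r2; set s1 := sin r1; set s2 := sin r2; set a := dot c1 c2.
set G := 1 + 2 * k1 * k2 * a - k1 ^+ 2 - k2 ^+ 2 - a ^+ 2.
move=> G0 hk1 hk2 k1p k2p s1p s2p.
have ha1 : a ^+ 2 < 1.
  case/andP: (hab) => hal hau.
  have : 0 <= k1 * k2 * (1 - a) by apply: mulr_ge0; [apply: mulr_ge0; apply: ltW | rewrite subr_ge0].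
  have := sqr_ge0 (k1 - k2); rewrite /G in G0; nra.
have hN : 1 - a ^+ 2 != 0 by rewrite subr_eq0 eq_sym lt_eqF.
split => //.
set N := 1 - a ^+ 2.
pose p := lin3 ((k1 - a * k2) / N) ((k2 - a * k1) / N) (Num.sqrt G / N) c1 c2 (cross c1 c2).
have [e1 e2 ep eD] := frame_facts ((k1 - a * k2) / N) ((k2 - a * k1) / N) (Num.sqrt G / N) h1 h2.
rewrite -/p -/a -/N in e1 e2 ep eD.
have hsG : Num.sqrt G ^+ 2 = G by rewrite sqr_sqrtr // ltW.
have pe1 : dot p c1 = k1 by rewrite e1 /N; field.
have pe2 : dot p c2 = k2 by rewrite e2 /N; field.
have hp : sphere p.
  rewrite /sphere /= ep !expr_div_n hsG /G /N; field.
  by rewrite /N in hN.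
have hD : dot (cross p c1) c2 != 0.
  rewrite eD; apply: mulf_neq0; last exact: hN.
  apply: mulf_neq0; last by rewrite invr_eq0.
  by rewrite gt_eqF // sqrtr_gt0.
have hcorner : corner c1 r1 c2 r2 p.
  split; split => //; rewrite /sdist acos_eq_iff ?dot_bound //.
have := hang p hcorner.
rewrite (corner_formula h1 h2 hp pe1 pe2 hk1 hk2 s1p s2p hD) -/a.
have eG : G = (s1 * s2) ^+ 2 - (a - k1 * k2) ^+ 2.
  have f1 : s1 ^+ 2 = 1 - k1 ^+ 2 by lra.
  have f2 : s2 ^+ 2 = 1 - k2 ^+ 2 by lra.
  rewrite /G exprMn f1 f2; ring.
have s12 : 0 < s1 * s2 by apply: mulr_gt0.
have hX : -1 <= (k1 * k2 - a) / (s1 * s2) <= 1.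
  apply/andP; split.
  - rewrite ler_pdivlMr //; nra.
  - rewrite ler_pdivrMr //; nra.
rewrite acos_eq_iff // => hc.
rewrite -hc; field.
by rewrite !gt_eqF.
Qed.
End Unique.
Local Open Scope classical_set_scope.
Local Close Scope classical_set_scope.
Section Exist.
Variable R : realType.
Implicit Types (x c p : vec3 R).

Definition Pt (t : R) : vec3 R := V3 (cos t) (sin t) 0.

Lemma Pt_sphere t : sphere (Pt t).
Proof.
rewrite /sphere /= /dot /=; have := cos2Dsin2 t; rewrite !expr2 => <-; ring.
Qed.

Lemma disk_pt x c (s r : R) : sphere x -> sphere c -> dot x c = cos s -> `|s| <= pi ->
  0 <= r <= pi -> (acos (dot x c) < r) = (`|s| < r).
Proof.
move=> hx hc e hs hr; rewrite acos_lt_iff ?dot_bound // e cos_lt_abs //.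
Qed.

Lemma pt_facts (p r1 r2 d : R) : 0 < r1 -> r1 < p / 2 -> 0 < r2 -> r2 < p / 2 ->
  0 <= d -> d <= p -> d < r1 + r2 -> - d < r1 - r2 -> r1 - r2 < d ->
  [/\ `|(d + r1 - r2) / 2| <= p, `|(d + r1 - r2) / 2| < r1,
      `|(d + r1 - r2) / 2 - d| <= p & `|(d + r1 - r2) / 2 - d| < r2] /\
  [/\ `|(d - r1 - r2) / 2| <= p, `|(d - r1 - r2) / 2| < r1,
      `|(d - r1 - r2) / 2 - d| <= p & ~ (`|(d - r1 - r2) / 2 - d| < r2)] /\
  [/\ `|(d + r1 + r2) / 2 - d| <= p, `|(d + r1 + r2) / 2 - d| < r2,
      `|(d + r1 + r2) / 2| <= p & ~ (`|(d + r1 + r2) / 2| < r1)].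
Proof.
move=> *; repeat split; rewrite ?ler_norml ?ltr_norml; try bnd;
  by move=> /andP [? ?]; lra.
Qed.

Lemma exist_bigon (th r1 r2 : R) : 0 < th < pi -> 0 < r1 < pi / 2 -> 0 < r2 < pi / 2 ->
  exists c1 c2 : vec3 R, is_bigon c1 r1 c2 r2 /\ bigon_has_angle c1 r1 c2 r2 th.
Proof.
move=> hth hr1 hr2.
have [k1p s1p hk1 pi0] := trig_facts hr1.
have [k2p s2p hk2 _] := trig_facts hr2.
have hr1c := hr1; have hr2c := hr2.
case/andP: hr1 => r10 r1p; case/andP: hr2 => r20 r2p.
case/andP: (hth) => th0 thp.
have hr1' : 0 <= r1 <= pi by bnd.
have hr2' : 0 <= r2 <= pi by bnd.
have hth' : 0 <= th <= pi by bnd.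
have hrs : 0 <= r1 + r2 <= pi by bnd.
have hra : 0 <= `|r1 - r2| <= pi by rewrite normr_ge0 /= ler_norml; bnd.
have cth1 : cos th < 1.
  rewrite -cos0 ltr_cos ?in0pi //; bnd.
have cth2 : -1 < cos th.
  rewrite -cospi ltr_cos ?in0pi //; bnd.
have cp : cos (r1 + r2) >= -1 := cos_geN1 _.
have cm : cos (r1 - r2) <= 1 := cos_le1 _.
move: cp cm; rewrite cosD cosB.
move: hk1 hk2 k1p k2p s1p s2p cth1 cth2.
set k1 := cos r1; set k2 := cos r2; set s1 := sin r1; set s2 := sin r2; set C := cos th.
move=> hk1 hk2 k1p k2p s1p s2p cth1 cth2 cp cm.
set a0 := k1 * k2 - s1 * s2 * C.
have s12 : 0 < s1 * s2 by apply: mulr_gt0.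
have lo : k1 * k2 - s1 * s2 < a0.
  rewrite -subr_gt0 /a0 (_ : k1 * k2 - s1 * s2 * C - (k1 * k2 - s1 * s2) = s1 * s2 * (1 - C)).
    by apply: mulr_gt0; rewrite // subr_gt0.
  by ring.
have hi : a0 < k1 * k2 + s1 * s2.
  rewrite -subr_gt0 /a0 (_ : k1 * k2 + s1 * s2 - (k1 * k2 - s1 * s2 * C) = s1 * s2 * (1 + C)).
    by apply: mulr_gt0; rewrite // -ltrBlDl sub0r.
  by ring.
have ha0 : -1 <= a0 <= 1.
  by apply/andP; split; [exact: le_trans cp (ltW lo) | exact: le_trans (ltW hi) cm].
set d := acos a0.
have cd : cos d = a0 by rewrite acosK // in11.
have d0 : 0 <= d := acos_ge0 ha0.
have dpi : d <= pi := acos_lepi ha0.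
have dlt : d < r1 + r2.
  rewrite /d acos_lt_iff //.
  by rewrite cosD.
have dgt : `|r1 - r2| < d.
  rewrite ltNge /d acos_le_iff //.
  by rewrite cos_norm cosB -ltNge.
move: dgt; rewrite ltr_norml => /andP [dg1 dg2].
pose c1 : vec3 R := V3 1 0 0.
pose c2 : vec3 R := V3 (cos d) (sin d) 0.
have h1 : sphere c1 by rewrite /sphere /= /dot /=; ring.
have h2 : sphere c2 by apply: Pt_sphere.
have e12 : dot c1 c2 = a0 by rewrite /dot /= cd; ring.
have P1 t : dot (Pt t) c1 = cos t by rewrite /dot /=; ring.
have P2 t : dot (Pt t) c2 = cos (t - d) by rewrite /dot /= cosB; ring.
have D1 t : `|t| <= pi -> (acos (dot (Pt t) c1) < r1) = (`|t| < r1).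
  by move=> ht; apply: disk_pt => //; apply: Pt_sphere.
have D2 t : `|t - d| <= pi -> (acos (dot (Pt t) c2) < r2) = (`|t - d| < r2).
  by move=> ht; apply: disk_pt => //; apply: Pt_sphere.
have [[q1 q2 q3 q4] [[q5 q6 q7 q8] [q9 q10 q11 q12]]] :=
  pt_facts r10 r1p r20 r2p d0 dpi dlt dg1 dg2.
exists c1, c2; split.
- split; first by split.
  split.
  + exists (Pt ((d + r1 - r2) / 2)).
    split; split; try exact: Pt_sphere; rewrite /sdist.
    * by rewrite D1.
    * by rewrite D2.
  + move=> sub.
    have hin : acos (dot (Pt ((d - r1 - r2) / 2)) c1) < r1 by rewrite D1.
    have [_] := sub _ (conj (Pt_sphere _) hin).
    by rewrite /sdist D2.
  + move=> sub.
    have hin : acos (dot (Pt ((d + r1 + r2) / 2)) c2) < r2 by rewrite D2.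
    have [_] := sub _ (conj (Pt_sphere _) hin).
    by rewrite /sdist D1.
- move=> p [[hp dp1] [_ dp2]].
  have pe1 : dot p c1 = cos r1.
    by apply/(acos_eq_iff (dot_bound hp h1) hr1').
  have pe2 : dot p c2 = cos r2.
    by apply/(acos_eq_iff (dot_bound hp h2) hr2').
  have DD := corner_D2 h1 h2 hp pe1 pe2.
  have f1 : s1 ^+ 2 = 1 - k1 ^+ 2 by rewrite -hk1 addrC addKr.
  have f2 : s2 ^+ 2 = 1 - k2 ^+ 2 by rewrite -hk2 addrC addKr.
  have eG : 1 + 2 * k1 * k2 * a0 - k1 ^+ 2 - k2 ^+ 2 - a0 ^+ 2 =
            (s1 * s2) ^+ 2 - (a0 - k1 * k2) ^+ 2.
    by rewrite exprMn f1 f2; ring.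
  have eG2 : (a0 - k1 * k2) ^+ 2 = (s1 * s2) ^+ 2 * C ^+ 2 by rewrite /a0; ring.
  have Gp : 0 < (s1 * s2) ^+ 2 - (a0 - k1 * k2) ^+ 2.
    rewrite eG2 -[X in X - _]mulr1 -mulrBr.
    apply: mulr_gt0; first by rewrite exprn_gt0.
    have -> : 1 - C ^+ 2 = (1 - C) * (1 + C) by ring.
    by apply: mulr_gt0; rewrite ?subr_gt0 // -ltrBlDl sub0r.
  have hD : dot (cross p c1) c2 != 0.
    apply/eqP => h0; move: DD; rewrite h0 e12 -/k1 -/k2 eG expr0n /= => h0'.
    by move: Gp; rewrite -h0' ltxx.
  rewrite (corner_formula h1 h2 hp pe1 pe2 hk1 hk2 s1p s2p hD) e12.
  have -> : (k1 * k2 - a0) / (s1 * s2) = C.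
    by rewrite /a0; field; rewrite !gt_eqF.
  by rewrite /C cosK // in0pi.
Qed.
End Exist.
Local Open Scope classical_set_scope.

Theorem lemma3p1 (R : realType) (theta r1 r2 : R) :
  0 < theta < pi -> 0 < r1 < pi / 2 -> 0 < r2 < pi / 2 ->
  (exists c1 c2 : vec3 R,
      is_bigon c1 r1 c2 r2 /\ bigon_has_angle c1 r1 c2 r2 theta) /\
  (forall c1 c2 c1' c2' : vec3 R,
      is_bigon c1 r1 c2 r2 -> bigon_has_angle c1 r1 c2 r2 theta ->
      is_bigon c1' r1 c2' r2 -> bigon_has_angle c1' r1 c2' r2 theta ->
      bigon_congruent c1 r1 c2 r2 c1' r1 c2' r2).
Proof.
move=> hth hr1 hr2; split; first exact: exist_bigon.
move=> c1 c2 c1' c2' B A B' A'.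
have [e hN] := angle_dot hth B A.
have [e' _] := angle_dot hth B' A'.
case: B => [[h1 h2 _ _] _]; case: B' => [[h1' h2' _ _] _].
by apply: iso_congr => //; rewrite e e'.
Qed.
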